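(* For every constant $c>0$ there is a constant $A_c>0$ such that for every $n\ge 2$, every straight-line drawing of the complete graph $K_n$ in the hyperbolic plane with vertex-vertex resolution at least $c$ has angular resolution at most $A_c/n^2$.
   Context: The hyperbolic plane is the complete simply connected Riemannian surface of constant curvature $-1$. A straight-line drawing of a graph in the hyperbolic plane places the vertices at distinct points and draws each edge as the hyperbolic geodesic segment between its endpoints (crossings are allowed). The vertex-vertex resolution is the minimum hyperbolic distance between two distinct vertices; the angular resolution is the minimum angle formed at a vertex between two edges incident to that vertex. *)

(* Defs.v *)
From Stdlib Require Export Reals Lra Lia.
Open Scope R_scope.

Definition pt := (R * R * R)%type.

Definition mink (p q : pt) : R :=
  let '(p0, p1, p2) := p in let '(q0, q1, q2) := q in
  - p0 * q0 + p1 * q1 + p2 * q2.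

Definition on_H2 (p : pt) : Prop :=
  mink p p = -1 /\ 0 < fst (fst p).

Definition arcosh (x : R) : R := ln (x + sqrt (x * x - 1)).

Definition hdist (p q : pt) : R := arcosh (- mink p q).

Definition vadd (p q : pt) : pt :=
  let '(p0, p1, p2) := p in let '(q0, q1, q2) := q in (p0 + q0, p1 + q1, p2 + q2).
Definition vscale (a : R) (p : pt) : pt :=
  let '(p0, p1, p2) := p in (a * p0, a * p1, a * p2).

(* Initial tangent vector at p of the geodesic segment from p to q
   (the Minkowski-orthogonal projection of q onto T_p H^2). *)
Definition tangent_to (p q : pt) : pt := vadd q (vscale (mink p q) p).

(* Angle at vertex p between the geodesic segments [p,q] and [p,r]
   (the tangent space T_p H^2 is spacelike, so mink is an inner product there). *)
Definition hangle (p q r : pt) : R :=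
  let u := tangent_to p q in
  let w := tangent_to p r in
  acos (mink u w / sqrt (mink u u * mink w w)).

(* Main.v *)
Require Import Defs.
From Stdlib Require Import Reals Lra Lia List Bool Classical.
Open Scope R_scope.

Lemma argmin_list (f : nat -> R) (l : list nat) :
  l <> nil -> exists m, In m l /\ forall y, In y l -> f m <= f y.
Proof.
  induction l as [|x l IH]; intros H; [congruence|].
  destruct l as [|y l'].
  - exists x; split; [left; auto|]. intros y [<-|[]]; lra.
  - destruct IH as [m [Hm1 Hm2]]; [discriminate|].
    destruct (Rle_dec (f x) (f m)).
    + exists x; split; [left; auto|]. intros z [<-|Hz]; [lra|]. specialize (Hm2 z Hz); lra.
    + exists m; split; [right; auto|]. intros z [<-|Hz]; [lra|]. auto.
Qed.

Lemma argmax_list {A : Type} (f : A -> R) (l : list A) :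
  l <> nil -> exists m, In m l /\ forall y, In y l -> f y <= f m.
Proof.
  induction l as [|x l IH]; intros H; [congruence|].
  destruct l as [|y l'].
  - exists x; split; [left; auto|]. intros y [<-|[]]; lra.
  - destruct IH as [m [Hm1 Hm2]]; [discriminate|].
    destruct (Rle_dec (f m) (f x)).
    + exists x; split; [left; auto|]. intros z [<-|Hz]; [lra|]. specialize (Hm2 z Hz); lra.
    + exists m; split; [right; auto|]. intros z [<-|Hz]; [lra|]. auto.
Qed.

Lemma NoDup_remove_nat (l : list nat) x : NoDup l -> NoDup (remove Nat.eq_dec x l).
Proof.
  induction l as [|y l IH]; intros H; simpl; [constructor|].
  inversion H; subst.
  destruct (Nat.eq_dec x y); [auto|].
  constructor; [|auto].
  intros Hin; apply in_remove in Hin; tauto.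
Qed.

Lemma remove_length_NoDup (l : list nat) x : NoDup l -> In x l ->
  S (length (remove Nat.eq_dec x l)) = length l.
Proof.
  induction l as [|y l IH]; intros H Hin; [destruct Hin|].
  inversion H; subst. simpl.
  destruct (Nat.eq_dec x y).
  - subst. rewrite notin_remove; auto.
  - simpl. destruct Hin as [->|Hin]; [congruence|]. rewrite IH; auto.
Qed.

Lemma pack1d (s : nat -> R) (sg : R) : 0 < sg -> forall len (l : list nat) L w,
  length l = len -> NoDup l -> 0 <= w ->
  (forall i, In i l -> L <= s i <= L + w) ->
  (forall i j, In i l -> In j l -> i <> j -> sg <= Rabs (s i - s j)) ->
  INR (length l) <= w / sg + 1.
Proof.
  intros Hsg len. induction len as [|len IH]; intros l L w Hlen Hnd Hw Hin Hsep.
  - rewrite Hlen. simpl. assert (0 <= w / sg) by (apply Rle_mult_inv_pos; lra). lra.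
  - assert (Hne : l <> nil) by (intros ->; simpl in Hlen; discriminate).
    destruct (argmin_list s l Hne) as [m [Hm Hmin]].
    set (l' := remove Nat.eq_dec m l).
    assert (Hl' : length l' = len).
    { pose proof (remove_length_NoDup l m Hnd Hm). fold l' in H. lia. }
    destruct len as [|len'].
    + rewrite Hlen. simpl. assert (0 <= w / sg) by (apply Rle_mult_inv_pos; lra). lra.
    + assert (Hne' : l' <> nil) by (intros Habs; rewrite Habs in Hl'; simpl in Hl'; discriminate).
      destruct l' as [|j0 r] eqn:El'; [congruence|].
      assert (Hj0 : In j0 (remove Nat.eq_dec m l)) by (fold l'; rewrite El'; left; auto).
      apply in_remove in Hj0. destruct Hj0 as [Hj0 Hj0m].
      assert (Hs1 := Hsep j0 m Hj0 Hm Hj0m).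
      assert (Hs2 := Hmin j0 Hj0). assert (Hs3 := Hin j0 Hj0). assert (Hs4 := Hin m Hm).
      rewrite Rabs_right in Hs1 by lra.
      assert (IH' := IH l' (L + sg) (w - sg)).
      rewrite <- El' in *.
      assert (HIH : INR (length l') <= (w - sg) / sg + 1).
      { apply IH'; auto.
        - unfold l'; apply NoDup_remove_nat; auto.
        - lra.
        - intros i Hi. unfold l' in Hi. apply in_remove in Hi. destruct Hi as [Hi Him].
          pose proof (Hsep i m Hi Hm Him). pose proof (Hmin i Hi). pose proof (Hin i Hi).
          rewrite Rabs_right in H by lra. lra.
        - intros i j Hi Hj Hij. unfold l' in Hi, Hj. apply in_remove in Hi. apply in_remove in Hj.
          apply Hsep; tauto. }
      rewrite Hlen, <- Hl', S_INR.
      replace ((w - sg) / sg + 1) with (w / sg) in HIH by (field; lra). lra.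
Qed.

Definition wv (p : pt) : pt := let '(p0, p1, p2) := p in (p0 + 1, p1, p2).
Definition Mv (p x : pt) : pt :=
  vadd (vscale (-1) x) (vscale (2 * mink x (wv p) / mink (wv p) (wv p)) (wv p)).

Lemma Mv_mink p x y : mink (wv p) (wv p) <> 0 -> mink (Mv p x) (Mv p y) = mink x y.
Proof.
  destruct p as [[p0 p1] p2], x as [[x0 x1] x2], y as [[y0 y1] y2].
  unfold Mv, wv, vadd, vscale, mink in *. intros H. field. exact H.
Qed.

Lemma wv_nz p : on_H2 p -> mink (wv p) (wv p) <> 0.
Proof.
  destruct p as [[p0 p1] p2]. unfold on_H2, wv, mink; simpl. intros [H1 H2].
  replace (- (p0 + 1) * (p0 + 1) + p1 * p1 + p2 * p2) with (-2 * (p0 + 1))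
    by nra. lra.
Qed.

Lemma Mv_0 p x : on_H2 p -> fst (fst (Mv p x)) = - mink p x.
Proof.
  intros Hp. pose proof (wv_nz p Hp) as Hw. revert Hp Hw.
  destruct p as [[p0 p1] p2], x as [[x0 x1] x2].
  unfold on_H2, Mv, wv, vadd, vscale, mink; simpl. intros [H1 H2] Hw.
  replace (- (p0 + 1) * (p0 + 1) + p1 * p1 + p2 * p2) with (-2 * (p0 + 1)) in *
    by nra.
  field. lra.
Qed.

Definition X1 p x := snd (fst (Mv p x)).
Definition X2 p x := snd (Mv p x).

Lemma Xdot p x y : on_H2 p ->
  X1 p x * X1 p y + X2 p x * X2 p y = mink p x * mink p y + mink x y.
Proof.
  intros Hp. rewrite <- (Mv_mink p x y (wv_nz p Hp)).
  pose proof (Mv_0 p x Hp). pose proof (Mv_0 p y Hp).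
  unfold X1, X2. destruct (Mv p x) as [[a0 a1] a2], (Mv p y) as [[b0 b1] b2].
  simpl in *. replace (mink p x) with (- a0) by lra. replace (mink p y) with (- b0) by lra. ring.
Qed.

Lemma tangent_mink p x y : on_H2 p ->
  mink (tangent_to p x) (tangent_to p y) = mink x y + mink p x * mink p y.
Proof.
  intros [Hp _]. transitivity (mink x y + 2 * mink p x * mink p y + mink p x * mink p y * mink p p).
  - destruct p as [[p0 p1] p2], x as [[x0 x1] x2], y as [[y0 y1] y2].
    unfold tangent_to, vadd, vscale, mink. ring.
  - rewrite Hp. ring.
Qed.

Lemma mink_sym x y : mink x y = mink y x.
Proof. destruct x as [[x0 x1] x2], y as [[y0 y1] y2]. unfold mink. ring. Qed.

Lemma hdist_ge (c z : R) : 0 < c -> c <= arcosh z -> (exp c + / exp c) / 2 <= z.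
Proof.
  intros Hc H. unfold arcosh in H. set (E := exp c) in *.
  assert (HE : 1 < E) by (unfold E; rewrite <- exp_0; apply exp_increasing; lra).
  set (y := z + sqrt (z * z - 1)) in *.
  assert (Hy : E <= y).
  { destruct (Rlt_dec 0 y) as [Hy|Hy].
    - unfold E. rewrite <- (exp_ln y Hy).
      destruct (Rle_lt_or_eq_dec _ _ H) as [H'|H']; [left; apply exp_increasing; auto| rewrite <- H'; lra].
    - exfalso. assert (ln y = 0) by (unfold ln; destruct (Rlt_dec 0 y); [contradiction|reflexivity]). lra. }
  destruct (Rle_dec ((E + / E) / 2) z) as [|Hn]; [auto|exfalso].
  assert (HEi : 0 < / E) by (apply Rinv_0_lt_compat; lra).
  destruct (Rle_dec 0 (z * z - 1)) as [Hz|Hz].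
  - pose proof (sqrt_sqrt _ Hz). pose proof (sqrt_pos (z*z-1)).
    unfold y in Hy.
    assert (HEE : E * / E = 1) by (field; lra).
    assert (/ E < 1) by nra.
    assert (E - z > 0) by lra.
    assert ((E - z) * (E - z) <= z * z - 1) by nra.
    nra.
  - unfold y in Hy. rewrite sqrt_neg_0 in Hy by lra. assert (HEE : E * / E = 1) by (field; lra). nra.
Qed.

Lemma hangle_formula p x y : on_H2 p -> hangle p x y =
  acos ((mink x y + mink p x * mink p y) /
        sqrt ((mink x x + mink p x * mink p x) * (mink y y + mink p y * mink p y))).
Proof.
  intros Hp. unfold hangle. cbv zeta. rewrite !tangent_mink by auto. reflexivity.
Qed.

Lemma sq_le (x y : R) : 0 <= y -> x ^ 2 <= y ^ 2 -> x <= y.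
Proof. intros Hy H. destruct (Rle_dec x y); [auto|]. nra. Qed.

Lemma abs_ge_sq (x s : R) : 0 <= s -> s ^ 2 <= x ^ 2 -> s <= Rabs x.
Proof. intros Hs H. apply sq_le; [apply Rabs_pos|]. rewrite pow2_abs. auto. Qed.

Lemma pack_sq (s : nat -> R) (l : list nat) (W sg : R) :
  NoDup l -> 0 <= W -> 0 < sg ->
  (forall i, In i l -> s i ^ 2 <= W ^ 2) ->
  (forall i j, In i l -> In j l -> i <> j -> sg ^ 2 <= (s i - s j) ^ 2) ->
  INR (length l) <= 2 * W / sg + 1.
Proof.
  intros Hnd HW Hsg Hb Hsep.
  replace (2 * W / sg) with ((2 * W) / sg) by reflexivity.
  apply (pack1d s sg Hsg (length l) l (- W) (2 * W)); auto; [lra| |].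
  - intros i Hi. specialize (Hb i Hi).
    assert (Rabs (s i) <= W) by (apply sq_le; auto; rewrite pow2_abs; auto).
    unfold Rabs in H; destruct (Rcase_abs (s i)); lra.
  - intros i j Hi Hj Hij. apply abs_ge_sq; [lra|]. auto.
Qed.

Definition ltb (x y : R) : bool := if Rlt_dec x y then true else false.

Lemma ltb_true x y : ltb x y = true <-> x < y.
Proof. unfold ltb; destruct (Rlt_dec x y); split; intros; auto; try discriminate; contradiction. Qed.
Lemma ltb_false x y : ltb x y = false <-> y <= x.
Proof. unfold ltb; destruct (Rlt_dec x y); split; intros; auto; try discriminate; lra. Qed.

Lemma filter_split_le {A} (f g : A -> bool) (l : list A) :
  (length (filter f l) <= length (filter g l) + length (filter (fun x => negb (g x) && f x) l))%nat.
Proof.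
  induction l as [|x l IH]; simpl; [lia|].
  destruct (f x), (g x); simpl; lia.
Qed.

Lemma NoDup_filter' {A} (f : A -> bool) l : NoDup l -> NoDup (filter f l).
Proof. apply NoDup_filter. Qed.

Section Consts.
End Consts.

Definition mu (K0 : R) := (1 + K0) / 2.
Definition eta (K0 : R) := (K0 - 1) / 2.
Definition rho (K0 : R) := sqrt (mu K0).
Definition C1 (K0 G : R) := 2 * mu K0 * sqrt (2 * G * K0 / eta K0).
Definition C4 (K0 G : R) := (C1 K0 G + 1) / (rho K0 - 1).

Lemma rho_gt1 K0 : 1 < K0 -> 1 < rho K0.
Proof.
  intros H. unfold rho. rewrite <- sqrt_1. apply sqrt_lt_1; unfold mu; lra.
Qed.

Lemma rho_sq K0 : 1 < K0 -> rho K0 ^ 2 = mu K0.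
Proof. intros H. unfold rho. apply pow2_sqrt. unfold mu; lra. Qed.

Lemma band_count (K0 G : R) (l : list nat) (a s : nat -> R) (d : nat -> nat -> R) (k : nat) :
  1 < K0 -> 0 < G -> NoDup l ->
  (forall i, In i l -> s i ^ 2 <= 2 / (a i + 1)) ->
  (forall i j, In i l -> In j l -> i <> j -> d i j <= G * (s i - s j) ^ 2) ->
  (forall i j, In i l -> In j l -> i <> j -> forall A, 0 < A -> A <= a i < mu K0 * A ->
      A <= a j < mu K0 * A -> eta K0 / (mu K0 * A) ^ 2 <= d i j) ->
  (forall i, In i l -> K0 * mu K0 ^ k <= a i < mu K0 * (K0 * mu K0 ^ k)) ->
  INR (length l) <= C1 K0 G * rho K0 ^ k + 1.
Proof.
  intros HK HG Hnd Hs Hd Hband Hin.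
  set (A := K0 * mu K0 ^ k). change (K0 * mu K0 ^ k) with A in Hin.
  assert (Hmu : 1 < mu K0) by (unfold mu; lra).
  assert (Het : 0 < eta K0) by (unfold eta; lra).
  assert (HA : 0 < A) by (unfold A; apply Rmult_lt_0_compat; [lra| apply pow_lt; lra]).
  set (W := sqrt (2 / A)).
  set (sg := sqrt (eta K0 / G) / (mu K0 * A)).
  assert (HW2 : W ^ 2 = 2 / A) by (unfold W; apply pow2_sqrt; apply Rle_mult_inv_pos; lra).
  assert (Heg : 0 < eta K0 / G) by (apply Rdiv_lt_0_compat; lra).
  assert (Hsg2 : sg ^ 2 = eta K0 / G / (mu K0 * A) ^ 2).
  { unfold sg. unfold Rdiv at 1. rewrite Rpow_mult_distr, pow2_sqrt by lra.
    rewrite pow_inv. reflexivity. }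
  assert (Hsg : 0 < sg).
  { unfold sg. apply Rdiv_lt_0_compat; [apply sqrt_lt_R0; auto| nra]. }
  assert (HW : 0 <= W) by apply sqrt_pos.
  eapply Rle_trans.
  - apply (pack_sq s l W sg Hnd HW Hsg).
    + intros i Hi. rewrite HW2. eapply Rle_trans; [apply Hs; auto|].
      destruct (Hin i Hi). apply Rmult_le_compat_l; [lra|].
      apply Rinv_le_contravar; [exact HA| lra].
    + intros i j Hi Hj Hij. rewrite Hsg2.
      pose proof (Hband i j Hi Hj Hij A HA (Hin i Hi) (Hin j Hj)).
      pose proof (Hd i j Hi Hj Hij).
      assert (0 < (mu K0 * A) ^ 2) by (apply pow_lt; nra).
      apply (Rmult_le_reg_l G); [lra|].
      replace (G * (eta K0 / G / (mu K0 * A) ^ 2)) with (eta K0 / (mu K0 * A) ^ 2) by (field; lra).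
      lra.
  - apply Rplus_le_compat_r.
    assert (Hr : 0 <= rho K0 ^ k) by (apply pow_le; pose proof (rho_gt1 K0 HK); lra).
    assert (HC : 0 <= C1 K0 G).
    { unfold C1. apply Rmult_le_pos; [lra| apply sqrt_pos]. }
    apply sq_le; [apply Rmult_le_pos; auto|].
    assert (E1 : (2 * W / sg) ^ 2 = 4 * W ^ 2 / sg ^ 2) by (field; lra).
    rewrite E1, HW2, Hsg2.
    assert (E2 : (C1 K0 G * rho K0 ^ k) ^ 2 = 4 * mu K0 ^ 2 * (2 * G * K0 / eta K0) * mu K0 ^ k).
    { unfold C1. rewrite Rpow_mult_distr, <- pow_mult, (Nat.mul_comm k 2), pow_mult, rho_sq by auto.
      rewrite !Rpow_mult_distr, pow2_sqrt; [ring|].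
      apply Rle_mult_inv_pos; [nra|lra]. }
    rewrite E2. unfold A. right. field. repeat split; try lra.
    apply pow_nonzero; lra.
Qed.

Lemma filter_none {A} (f : A -> bool) l : (forall x, In x l -> f x = false) -> filter f l = nil.
Proof.
  induction l as [|x l IH]; intros H; simpl; [auto|].
  rewrite H by (left; auto). apply IH. intros; apply H; right; auto.
Qed.

Definition near (a : nat -> R) (t : R) (l : list nat) := filter (fun i => ltb (a i) t) l.

Lemma near_count (K0 G : R) (l : list nat) (a s : nat -> R) (d : nat -> nat -> R) :
  1 < K0 -> 0 < G -> NoDup l ->
  (forall i, In i l -> K0 <= a i) ->
  (forall i, In i l -> s i ^ 2 <= 2 / (a i + 1)) ->
  (forall i j, In i l -> In j l -> i <> j -> d i j <= G * (s i - s j) ^ 2) ->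
  (forall i j, In i l -> In j l -> i <> j -> forall A, 0 < A -> A <= a i < mu K0 * A ->
      A <= a j < mu K0 * A -> eta K0 / (mu K0 * A) ^ 2 <= d i j) ->
  forall k, INR (length (near a (K0 * mu K0 ^ k) l)) <= C4 K0 G * rho K0 ^ k.
Proof.
  intros HK HG Hnd Ha Hs Hd Hband.
  assert (Hr := rho_gt1 K0 HK).
  assert (HC : 0 <= C1 K0 G) by (unfold C1; apply Rmult_le_pos; [unfold mu; lra| apply sqrt_pos]).
  assert (HC4 : 0 <= C4 K0 G) by (unfold C4; apply Rle_mult_inv_pos; lra).
  induction k as [|k IH].
  - replace (near a (K0 * mu K0 ^ 0) l) with (@nil nat).
    + simpl. lra.
    + unfold near. symmetry. apply filter_none.
      intros x Hx. apply ltb_false. simpl. rewrite Rmult_1_r. apply Ha; auto.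
  - unfold near.
    pose proof (filter_split_le (fun i => ltb (a i) (K0 * mu K0 ^ S k)) (fun i => ltb (a i) (K0 * mu K0 ^ k)) l) as Hsp.
    apply le_INR in Hsp. rewrite plus_INR in Hsp.
    set (bl := filter (fun x => negb (ltb (a x) (K0 * mu K0 ^ k)) && ltb (a x) (K0 * mu K0 ^ S k)) l) in Hsp.
    assert (Hb : INR (length bl) <= C1 K0 G * rho K0 ^ k + 1).
    { apply (band_count K0 G bl a s d k HK HG).
      - apply NoDup_filter; auto.
      - intros i Hi; apply filter_In in Hi; apply Hs; tauto.
      - intros i j Hi Hj; apply filter_In in Hi; apply filter_In in Hj; apply Hd; tauto.
      - intros i j Hi Hj; apply filter_In in Hi; apply filter_In in Hj; apply Hband; tauto.
      - intros i Hi; apply filter_In in Hi. destruct Hi as [_ Hi].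
        apply andb_true_iff in Hi. destruct Hi as [H1 H2].
        apply negb_true_iff, ltb_false in H1. apply ltb_true in H2.
        split; [lra|]. simpl in H2. lra. }
    unfold near in IH.
    assert (C4 K0 G * rho K0 ^ k + (C1 K0 G * rho K0 ^ k + 1) <= C4 K0 G * rho K0 ^ S k).
    { assert (H1 : 1 <= rho K0 ^ k) by (apply pow_R1_Rle; lra).
      assert (E : C4 K0 G * rho K0 ^ S k - C4 K0 G * rho K0 ^ k = (C1 K0 G + 1) * rho K0 ^ k).
      { unfold C4. simpl. field. lra. }
      nra. }
    lra.
Qed.

Lemma total_count (K0 G b0 : R) (l : list nat) (a s : nat -> R) (d : nat -> nat -> R) :
  1 < K0 -> 0 < G -> 0 < b0 -> NoDup l ->
  (forall i, In i l -> K0 <= a i) ->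
  (forall i, In i l -> s i ^ 2 <= 2 / (a i + 1)) ->
  (forall i j, In i l -> In j l -> i <> j -> d i j <= G * (s i - s j) ^ 2) ->
  (forall i j, In i l -> In j l -> i <> j -> forall A, 0 < A -> A <= a i < mu K0 * A ->
      A <= a j < mu K0 * A -> eta K0 / (mu K0 * A) ^ 2 <= d i j) ->
  (forall i j, In i l -> In j l -> i <> j -> b0 ^ 2 / 4 <= d i j) ->
  forall k, INR (length l) <= C4 K0 G * rho K0 ^ k
      + 4 * sqrt (2 / (K0 * mu K0 ^ k)) * sqrt G / b0 + 1.
Proof.
  intros HK HG Hb0 Hnd Ha Hs Hd Hband Hfar k.
  pose proof (near_count K0 G l a s d HK HG Hnd Ha Hs Hd Hband k) as Hn.
  set (T := K0 * mu K0 ^ k) in *.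
  assert (HT : 0 < T) by (unfold T; apply Rmult_lt_0_compat; [lra| apply pow_lt; unfold mu; lra]).
  pose proof (filter_length (fun i => ltb (a i) T) l) as Hfl.
  set (fl := filter (fun x => negb (ltb (a x) T)) l) in Hfl.
  set (W := sqrt (2 / T)).
  assert (HW2 : W ^ 2 = 2 / T) by (unfold W; apply pow2_sqrt; apply Rle_mult_inv_pos; lra).
  assert (HW : 0 <= W) by apply sqrt_pos.
  assert (HsG : 0 < sqrt G) by (apply sqrt_lt_R0; auto).
  assert (HsG2 : sqrt G ^ 2 = G) by (apply pow2_sqrt; lra).
  set (sg := b0 / (2 * sqrt G)).
  assert (Hsg : 0 < sg) by (unfold sg; apply Rdiv_lt_0_compat; lra).
  assert (Hf : INR (length fl) <= 2 * W / sg + 1).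
  { apply (pack_sq s fl W sg); auto.
    - apply NoDup_filter; auto.
    - intros i Hi. apply filter_In in Hi. destruct Hi as [Hi H2].
      apply negb_true_iff, ltb_false in H2. rewrite HW2.
      eapply Rle_trans; [apply Hs; auto|].
      apply Rmult_le_compat_l; [lra|]. apply Rinv_le_contravar; lra.
    - intros i j Hi Hj Hij. apply filter_In in Hi. apply filter_In in Hj.
      pose proof (Hfar i j (proj1 Hi) (proj1 Hj) Hij).
      pose proof (Hd i j (proj1 Hi) (proj1 Hj) Hij).
      assert (E : sg ^ 2 = b0 ^ 2 / 4 / G) by (unfold sg; rewrite <- HsG2 at 2; field; lra).
      rewrite E. apply (Rmult_le_reg_l G); [lra|].
      replace (G * (b0 ^ 2 / 4 / G)) with (b0 ^ 2 / 4) by (field; lra). lra. }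
  assert (E2 : 2 * W / sg = 4 * W * sqrt G / b0) by (unfold sg; field; lra).
  rewrite E2 in Hf.
  rewrite <- Hfl, plus_INR. unfold near in Hn. fold W. lra.
Qed.

Lemma bernoulli (h : R) (N : nat) : 0 <= h -> 1 + INR N * h <= (1 + h) ^ N.
Proof.
  intros Hh. induction N as [|N IH]; [simpl; lra|].
  rewrite S_INR. change ((1+h)^(S N)) with ((1+h) * (1+h)^N). assert (0 <= INR N) by apply pos_INR.
  assert (1 <= (1+h)^N) by (apply pow_R1_Rle; lra). nra.
Qed.

Lemma exists_k (K0 m X : R) : 0 < K0 -> 1 < m -> K0 <= X ->
  exists k, X <= K0 * m ^ k <= m * X.
Proof.
  intros HK Hm HX.
  assert (HN : exists N, X <= K0 * m ^ N).
  { destruct (INR_unbounded (X / K0 / (m - 1))) as [N HN]. exists N.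
    pose proof (bernoulli (m - 1) N ltac:(lra)). replace (1 + (m - 1)) with m in H by ring.
    assert (X / K0 <= m ^ N).
    { apply Rle_trans with (INR N * (m - 1)); [|lra].
      apply Rlt_le. apply (Rmult_lt_reg_r (/ (m - 1))). apply Rinv_0_lt_compat; lra.
      replace (INR N * (m - 1) * / (m - 1)) with (INR N) by (field; lra). unfold Rdiv in HN. lra. }
    apply (Rmult_le_reg_l (/ K0)). apply Rinv_0_lt_compat; lra.
    replace (/ K0 * (K0 * m ^ N)) with (m ^ N) by (field; lra). unfold Rdiv in H0. lra. }
  destruct HN as [N HN]. revert HN. induction N as [|N IH]; intros HN.
  - exists 0%nat. simpl in *. nra.
  - destruct (Rle_dec X (K0 * m ^ N)) as [H|H].
    + apply IH; auto.
    + exists (S N). split; auto. simpl. nra.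
Qed.

Definition Lam (K0 G : R) := K0 / (16 * C4 K0 G ^ 2 * mu K0).
Definition Aconst (K0 G : R) := 512 * G * PI ^ 2 / Lam K0 G + 25 * PI + PI * K0 / Lam K0 G + 1.

Lemma C4_pos K0 G : 1 < K0 -> 0 < G -> 0 < C4 K0 G.
Proof.
  intros HK HG. pose proof (rho_gt1 K0 HK).
  assert (HC : 0 <= C1 K0 G) by (unfold C1; apply Rmult_le_pos; [unfold mu; lra| apply sqrt_pos]).
  unfold C4. apply Rdiv_lt_0_compat; lra.
Qed.

Lemma Lam_pos K0 G : 1 < K0 -> 0 < G -> 0 < Lam K0 G.
Proof.
  intros HK HG. pose proof (C4_pos K0 G HK HG). unfold Lam, mu.
  apply Rdiv_lt_0_compat; [lra|]. assert (0 < C4 K0 G ^ 2) by (apply pow_lt; lra). nra.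
Qed.

Lemma final_arith (K0 G b0 : R) (n k : nat) :
  1 < K0 -> 0 < G -> 0 < b0 ->
  Aconst K0 G < PI * INR n ^ 2 ->
  Aconst K0 G / (PI * INR n ^ 2) <= b0 ->
  Lam K0 G * INR n ^ 2 <= K0 * mu K0 ^ k <= mu K0 * (Lam K0 G * INR n ^ 2) ->
  INR n - 1 <= C4 K0 G * rho K0 ^ k + 4 * sqrt (2 / (K0 * mu K0 ^ k)) * sqrt G / b0 + 1 ->
  False.
Proof.
  intros HK HG Hb HA Hb0 [HT1 HT2] Hc.
  pose proof (C4_pos K0 G HK HG) as HC4. pose proof (Lam_pos K0 G HK HG) as HL.
  pose proof (rho_gt1 K0 HK) as Hr. pose proof (rho_sq K0 HK) as Hr2.
  assert (Hmu : 1 < mu K0) by (unfold mu; lra).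
  pose proof PI_RGT_0 as Hpi.
  set (A := Aconst K0 G) in *. set (L := Lam K0 G) in *. set (T := K0 * mu K0 ^ k) in *.
  set (x := INR n) in *.
  assert (Hx0 : 0 <= x) by apply pos_INR.
  assert (HA1 : 512 * G * PI ^ 2 / L + 25 * PI + PI * K0 / L + 1 = A) by reflexivity.
  assert (H512 : 0 <= 512 * G * PI ^ 2 / L) by (apply Rle_mult_inv_pos; [nra|lra]).
  assert (HK0L : 0 <= PI * K0 / L) by (apply Rle_mult_inv_pos; [nra|lra]).
  assert (Hx5 : 25 < x ^ 2) by nra.
  assert (Hx : 5 < x) by nra.
  assert (HT : 0 < T) by nra.
  assert (Hn : C4 K0 G * rho K0 ^ k <= x / 4).
  { apply sq_le; [lra|].
    rewrite Rpow_mult_distr, <- pow_mult, Nat.mul_comm, pow_mult, Hr2.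
    assert (HmuT : K0 * mu K0 ^ k <= mu K0 * (L * x ^ 2)) by exact HT2.
    assert (E : L * (16 * C4 K0 G ^ 2 * mu K0) = K0).
    { unfold L, Lam. field. repeat split; unfold mu in *; lra. }
    assert (0 < C4 K0 G ^ 2) by (apply pow_lt; lra).
    apply (Rmult_le_reg_l (16 * K0)); [lra|].
    replace (16 * K0 * (x / 4) ^ 2) with (K0 * x ^ 2) by field.
    assert (C4 K0 G ^ 2 * (K0 * mu K0 ^ k) <= C4 K0 G ^ 2 * (mu K0 * (L * x ^ 2))) by (apply Rmult_le_compat_l; lra).
    assert (C4 K0 G ^ 2 * (mu K0 * (L * x ^ 2)) * 16 = K0 * x ^ 2) by (transitivity (L * (16 * C4 K0 G ^ 2 * mu K0) * x ^ 2); [ring| rewrite E; ring]).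
    lra. }
  assert (Hf : 4 * sqrt (2 / T) * sqrt G / b0 <= x / 4).
  { apply sq_le; [lra|].
    assert (E1 : (4 * sqrt (2 / T) * sqrt G / b0) ^ 2 = 32 * G / (T * b0 ^ 2)).
    { assert (Hu : sqrt (2 / T) ^ 2 = 2 / T) by (apply pow2_sqrt; apply Rle_mult_inv_pos; lra).
      assert (Hv : sqrt G ^ 2 = G) by (apply pow2_sqrt; lra).
      replace ((4 * sqrt (2 / T) * sqrt G / b0) ^ 2) with (16 * sqrt (2 / T) ^ 2 * sqrt G ^ 2 / b0 ^ 2) by (field; lra).
      rewrite Hu, Hv. field. split; lra. }
    rewrite E1.
    assert (HA2 : 512 * G * PI ^ 2 / L <= A ^ 2) by nra.
    assert (Hb2 : A ^ 2 / (PI * x ^ 2) ^ 2 <= b0 ^ 2).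
    { replace (A ^ 2 / (PI * x ^ 2) ^ 2) with ((A / (PI * x ^ 2)) ^ 2) by (field; nra).
      apply pow_incr. split; [apply Rle_mult_inv_pos; nra| auto]. }
    assert (HTb : L * x ^ 2 * (A ^ 2 / (PI * x ^ 2) ^ 2) <= T * b0 ^ 2).
    { apply Rmult_le_compat; try nra. apply Rle_mult_inv_pos; [nra|]. apply pow_lt; nra. }
    assert (E2 : L * x ^ 2 * (A ^ 2 / (PI * x ^ 2) ^ 2) = L * A ^ 2 / (PI ^ 2 * x ^ 2)) by (field; nra).
    rewrite E2 in HTb.
    assert (H3 : 512 * G <= L * A ^ 2 / PI ^ 2).
    { apply (Rmult_le_reg_l (/ L)); [apply Rinv_0_lt_compat; lra|].
      replace (/ L * (L * A ^ 2 / PI ^ 2)) with (A ^ 2 / PI ^ 2) by (field; nra).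
      apply (Rmult_le_reg_l (PI ^ 2)); [nra|].
      replace (PI ^ 2 * (A ^ 2 / PI ^ 2)) with (A ^ 2) by (field; nra).
      replace (PI ^ 2 * (/ L * (512 * G))) with (512 * G * PI ^ 2 / L) by (field; lra). lra. }
    assert (HTb2 : 512 * G <= x ^ 2 * (T * b0 ^ 2)).
    { apply Rle_trans with (L * A ^ 2 / PI ^ 2); auto.
      replace (L * A ^ 2 / PI ^ 2) with (x ^ 2 * (L * A ^ 2 / (PI ^ 2 * x ^ 2))) by (field; nra).
      apply Rmult_le_compat_l; nra. }
    assert (0 < T * b0 ^ 2) by (apply Rmult_lt_0_compat; [lra| apply pow_lt; lra]).
    apply (Rmult_le_reg_l (T * b0 ^ 2)); [lra|].
    replace (T * b0 ^ 2 * (32 * G / (T * b0 ^ 2))) with (32 * G) by (field; lra).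
    nra. }
  lra.
Qed.

Lemma band_gap (a b ra rb m : R) : 1 <= a -> a <= b -> b <= m * a -> 0 <= ra -> 0 <= rb ->
  ra ^ 2 = a ^ 2 - 1 -> rb ^ 2 = b ^ 2 - 1 -> a * b - ra * rb <= m.
Proof.
  intros H1 H2 H3 Hra Hrb Ea Eb.
  assert (Hk : b * ra <= a * rb).
  { destruct (Rle_dec (b * ra) (a * rb)) as [|Hn]; [auto|].
    assert (0 <= a * rb) by (apply Rmult_le_pos; lra).
    assert ((a * rb) ^ 2 < (b * ra) ^ 2).
    { assert (0 < (b * ra - a * rb) * (b * ra + a * rb)) by (apply Rmult_lt_0_compat; lra). nra. }
    assert ((b * ra) ^ 2 <= (a * rb) ^ 2).
    { replace ((b * ra) ^ 2) with (b ^ 2 * (a ^ 2 - 1)) by (rewrite <- Ea; ring).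
      replace ((a * rb) ^ 2) with (a ^ 2 * (b ^ 2 - 1)) by (rewrite <- Eb; ring). nra. }
    lra. }
  assert (a * b - ra * rb <= b / a).
  { apply (Rmult_le_reg_l a); [lra|].
    replace (a * (b / a)) with b by (field; lra).
    assert (a * (a * b - ra * rb) = b * (a^2 - 1) + b - a * ra * rb) by ring.
    rewrite H. rewrite <- Ea. nra. }
  assert (b / a <= m).
  { apply (Rmult_le_reg_l a); [lra|]. replace (a * (b / a)) with b by (field; lra). lra. }
  lra.
Qed.

Lemma cs_bound (cx cy sx sy g : R) : 0 < g -> 0 <= cx -> 0 <= cy ->
  cx ^ 2 + sx ^ 2 = 1 -> cy ^ 2 + sy ^ 2 = 1 -> g <= cx ^ 2 -> g <= cy ^ 2 ->
  1 - (cx * cy + sx * sy) <= (/ g + / 2) * (sx - sy) ^ 2.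
Proof.
  intros Hg Hcx Hcy E1 E2 G1 G2.
  assert (Hd : (cx - cy) ^ 2 * (cx + cy) ^ 2 = (sx - sy) ^ 2 * (sx + sy) ^ 2).
  { replace ((cx - cy) ^ 2 * (cx + cy) ^ 2) with ((cx^2 - cy^2)^2) by ring.
    replace ((sx - sy) ^ 2 * (sx + sy) ^ 2) with ((sx^2 - sy^2)^2) by ring.
    replace (cx ^ 2) with (1 - sx ^ 2) by lra. replace (cy ^ 2) with (1 - sy ^ 2) by lra. ring. }
  assert (Hs : (sx + sy) ^ 2 <= 4) by nra.
  assert (Hc : 2 * g <= (cx + cy) ^ 2).
  { assert (0 <= cx * cy) by (apply Rmult_le_pos; lra).
    replace ((cx + cy) ^ 2) with (cx ^ 2 + cy ^ 2 + 2 * (cx * cy)) by ring. lra. }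
  assert (Hcc : (cx - cy) ^ 2 * (2 * g) <= 4 * (sx - sy) ^ 2).
  { apply Rle_trans with ((cx - cy) ^ 2 * (cx + cy) ^ 2).
    - apply Rmult_le_compat_l; [apply pow2_ge_0| lra].
    - rewrite Hd. rewrite (Rmult_comm 4). apply Rmult_le_compat_l; [apply pow2_ge_0| lra]. }
  assert (Hcc2 : (cx - cy) ^ 2 <= 2 / g * (sx - sy) ^ 2).
  { apply (Rmult_le_reg_l (2 * g)); [lra|].
    replace (2 * g * (2 / g * (sx - sy) ^ 2)) with (4 * (sx - sy) ^ 2) by (field; lra). lra. }
  assert (E : 1 - (cx * cy + sx * sy) = ((cx - cy) ^ 2 + (sx - sy) ^ 2) / 2).
  { replace 1 with ((cx ^ 2 + sx ^ 2 + (cy ^ 2 + sy ^ 2)) / 2) at 1 by lra. field. }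
  rewrite E. assert (0 <= (sx - sy) ^ 2) by apply pow2_ge_0.
  replace ((/ g + / 2) * (sx - sy) ^ 2) with ((2 / g * (sx - sy) ^ 2 + (sx - sy) ^ 2) / 2) by (field; lra). lra.
Qed.

Lemma lens_c (c QX rq rx B a : R) : 1 < a -> 1 < B -> 0 < rq -> 0 < rx ->
  rq ^ 2 = B ^ 2 - 1 -> rx ^ 2 = a ^ 2 - 1 -> B * (a - 1) <= QX -> c = QX / (rq * rx) ->
  0 <= c /\ (a - 1) / (a + 1) <= c ^ 2.
Proof.
  intros Ha HB Hq Hx Eq Ex HQ Ec.
  assert (Hrq : rq < B) by nra.
  assert (H1 : rq * (a - 1) <= QX) by nra.
  assert (H2 : (a - 1) / rx <= c).
  { rewrite Ec. apply (Rmult_le_reg_l (rq * rx)); [nra|].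
    replace (rq * rx * ((a - 1) / rx)) with (rq * (a - 1)) by (field; lra).
    replace (rq * rx * (QX / (rq * rx))) with QX by (field; lra). lra. }
  assert (H3 : 0 <= (a - 1) / rx) by (apply Rle_mult_inv_pos; lra).
  split; [lra|].
  assert (((a - 1) / rx) ^ 2 <= c ^ 2) by (apply pow_incr; lra).
  replace ((a - 1) / (a + 1)) with (((a - 1) / rx) ^ 2); [lra|].
  replace (((a - 1) / rx) ^ 2) with ((a - 1) ^ 2 / rx ^ 2) by (field; lra).
  rewrite Ex. field. split; nra.
Qed.

Lemma cos_ub (x : R) : 0 <= x <= 1 -> cos x <= 1 - x ^ 2 / 4.
Proof.
  intros Hx. pose proof PI2_1 as Hpi.
  destruct (cos_bound x 0 ltac:(lra) ltac:(lra)) as [_ Hc].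
  unfold cos_approx, cos_term in Hc. simpl in Hc.
  assert (H0 : 0 <= x * x) by nra. assert (H1 : x * x <= 1) by nra.
  assert (H2 : (x * x) * (x * x) <= (x * x) * 1) by (apply Rmult_le_compat_l; lra).
  replace (1 - x ^ 2 / 4) with (1 - x * x / 2 + x * x / 4) by field.
  eapply Rle_trans; [exact Hc|].
  replace (x * (x * (x * (x * 1)))) with ((x * x) * (x * x)) by ring. lra.
Qed.

Lemma angle_lb (b0 z : R) : 0 < b0 <= 1 -> -1 <= z <= 1 -> b0 < acos z -> b0 ^ 2 / 4 <= 1 - z.
Proof.
  intros Hb Hz Ha. pose proof PI2_1 as Hpi. pose proof (acos_bound z) as Hab.
  assert (z < cos b0).
  { destruct (Rlt_dec z (cos b0)) as [|Hn]; [auto|exfalso].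
    assert (acos z <= b0).
    { apply cos_decr_0; try lra. rewrite cos_acos; lra. }
    lra. }
  pose proof (cos_ub b0 ltac:(lra)). lra.
Qed.

Lemma hangle_le_PI p q r : hangle p q r <= PI.
Proof. unfold hangle. cbv zeta. apply acos_bound. Qed.

Lemma frac_mono (K0 a : R) : 1 < K0 -> K0 <= a -> (K0 - 1) / (K0 + 1) <= (a - 1) / (a + 1).
Proof.
  intros H1 H2. apply (Rmult_le_reg_r ((K0 + 1) * (a + 1))); [nra|].
  replace ((K0 - 1) / (K0 + 1) * ((K0 + 1) * (a + 1))) with ((K0 - 1) * (a + 1)) by (field; lra).
  replace ((a - 1) / (a + 1) * ((K0 + 1) * (a + 1))) with ((a - 1) * (K0 + 1)) by (field; lra).
  nra.
Qed.

Lemma Aconst_pos K0 G : 1 < K0 -> 0 < G -> 0 < Aconst K0 G.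
Proof.
  intros HK HG. pose proof (Lam_pos K0 G HK HG). pose proof PI_RGT_0.
  unfold Aconst.
  assert (0 <= 512 * G * PI ^ 2 / Lam K0 G) by (apply Rle_mult_inv_pos; [nra|lra]).
  assert (0 <= PI * K0 / Lam K0 G) by (apply Rle_mult_inv_pos; [nra|lra]).
  lra.
Qed.

Theorem theorem6 :
  forall c : R, 0 < c ->
  exists A : R, 0 < A /\
    forall (n : nat) (v : nat -> pt),
      (2 <= n)%nat ->
      (forall i, (i < n)%nat -> on_H2 (v i)) ->
      (forall i j, (i < n)%nat -> (j < n)%nat -> i <> j -> v i <> v j) ->
      (forall i j, (i < n)%nat -> (j < n)%nat -> i <> j -> c <= hdist (v i) (v j)) ->
      (3 <= n)%nat ->
      exists i j k : nat,
        (i < n)%nat /\ (j < n)%nat /\ (k < n)%nat /\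
        i <> j /\ i <> k /\ j <> k /\
        hangle (v i) (v j) (v k) <= A / (INR n ^ 2).
Proof.
  intros c Hc.
  assert (HE : 1 < exp c) by (rewrite <- exp_0; apply exp_increasing; lra).
  set (K0 := (exp c + / exp c) / 2).
  assert (HK0 : 1 < K0).
  { unfold K0. assert (exp c * / exp c = 1) by (field; lra).
    assert (0 < / exp c) by (apply Rinv_0_lt_compat; lra). nra. }
  set (gam := (K0 - 1) / (K0 + 1)).
  assert (Hgam : 0 < gam) by (unfold gam; apply Rdiv_lt_0_compat; lra).
  set (G := / gam + / 2).
  assert (HG : 0 < G).
  { unfold G. assert (0 < / gam) by (apply Rinv_0_lt_compat; lra).
    assert (0 < / 2) by (apply Rinv_0_lt_compat; lra). lra. }
  exists (Aconst K0 G). split; [apply Aconst_pos; auto|].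
  intros n v Hn2 HH2 Hdist Hres Hn3.
  assert (Hnpos : 0 < INR n ^ 2) by (apply pow_lt; apply lt_0_INR; lia).
  pose proof PI_RGT_0 as Hpi.
  destruct (Rle_dec (PI * INR n ^ 2) (Aconst K0 G)) as [Hsmall|Hbig].
  { exists 0%nat, 1%nat, 2%nat. repeat split; try lia.
    eapply Rle_trans; [apply hangle_le_PI|].
    apply (Rmult_le_reg_r (INR n ^ 2)); auto.
    replace (Aconst K0 G / INR n ^ 2 * INR n ^ 2) with (Aconst K0 G) by (field; apply not_0_INR; lia). lra. }
  apply Rnot_le_lt in Hbig.
  apply NNPP; intros Hno.
  set (bet := Aconst K0 G / INR n ^ 2).
  assert (Hgt : forall i j k, (i < n)%nat -> (j < n)%nat -> (k < n)%nat -> i <> j -> i <> k -> j <> k ->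
     bet < hangle (v i) (v j) (v k)).
  { intros i j k Hi Hj Hk Hij Hik Hjk. apply Rnot_le_lt. intros Hle.
    apply Hno. exists i, j, k. repeat split; auto. }
  clear Hno.
  set (bb := fun i j => - mink (v i) (v j)).
  set (P := filter (fun ij : nat * nat => negb (Nat.eqb (fst ij) (snd ij))) (list_prod (seq 0 n) (seq 0 n))).
  assert (HP01 : In (0%nat, 1%nat) P).
  { unfold P. apply filter_In. split; [apply in_prod; apply in_seq; lia| reflexivity]. }
  assert (HPne : P <> nil) by (intros H; rewrite H in HP01; destruct HP01).
  destruct (argmax_list (fun ij => bb (fst ij) (snd ij)) P HPne) as [[p q] [Hpq Hmax]].
  unfold P in Hpq. apply filter_In in Hpq. destruct Hpq as [Hpq1 Hpq2].
  apply in_prod_iff in Hpq1. rewrite !in_seq in Hpq1. simpl in Hpq2.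
  apply negb_true_iff, Nat.eqb_neq in Hpq2.
  assert (Hmax' : forall i j, (i < n)%nat -> (j < n)%nat -> i <> j -> bb i j <= bb p q).
  { intros i j Hi Hj Hij. apply (Hmax (i, j)). unfold P. apply filter_In. split.
    - apply in_prod; apply in_seq; lia.
    - simpl. apply negb_true_iff, Nat.eqb_neq; auto. }
  simpl in Hmax'.
  assert (HbK : forall i j, (i < n)%nat -> (j < n)%nat -> i <> j -> K0 <= bb i j).
  { intros i j Hi Hj Hij. apply (hdist_ge c); auto. apply Hres; auto. }
  assert (Hp : on_H2 (v p)) by (apply HH2; lia).
  set (a := fun i => - mink (v p) (v i)).
  set (Xa := fun i => X1 (v p) (v i)). set (Xb := fun i => X2 (v p) (v i)).
  set (r := fun i => sqrt (a i ^ 2 - 1)).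
  set (e1 := fun i => Xa i / r i). set (e2 := fun i => Xb i / r i).
  set (z := fun i j => e1 i * e1 j + e2 i * e2 j).
  set (cx := fun i => z q i). set (sx := fun i => e1 q * e2 i - e2 q * e1 i).
  set (d := fun i j => 1 - z i j).
  set (l := filter (fun i => negb (Nat.eqb i p)) (seq 0 n)).
  assert (Hl : forall i, In i l <-> (i < n)%nat /\ i <> p).
  { intros i. unfold l. rewrite filter_In, in_seq, negb_true_iff, Nat.eqb_neq. intuition lia. }
  assert (Hnd : NoDup l) by (apply NoDup_filter, seq_NoDup).
  assert (Hlen : (n <= S (length l))%nat).
  { change (S (length l)) with (length (p :: l)). rewrite <- (length_seq n 0) at 1.
    apply NoDup_incl_length; [apply seq_NoDup|].
    intros i Hi. apply in_seq in Hi. destruct (Nat.eq_dec i p); [left; auto| right; apply Hl; lia]. }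

  assert (Hq : In q l) by (apply Hl; lia).
  assert (HaK : forall i, In i l -> K0 <= a i).
  { intros i Hi. apply Hl in Hi. exact (HbK p i ltac:(lia) ltac:(lia) ltac:(lia)). }
  assert (Hmm : forall i, In i l -> mink (v i) (v i) = -1).
  { intros i Hi. apply Hl in Hi. apply (HH2 i). lia. }
  assert (HX : forall i j, In i l -> In j l -> Xa i * Xa j + Xb i * Xb j = a i * a j - bb i j).
  { intros i j Hi Hj. unfold Xa, Xb, a, bb. rewrite Xdot by auto. ring. }
  assert (Hr : forall i, In i l -> 0 < r i /\ r i ^ 2 = a i ^ 2 - 1).
  { intros i Hi. pose proof (HaK i Hi). unfold r. split.
    - apply sqrt_lt_R0. nra.
    - apply pow2_sqrt. nra. }
  assert (Hra : forall i, In i l -> r i < a i).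
  { intros i Hi. destruct (Hr i Hi). pose proof (HaK i Hi). nra. }
  assert (HXX : forall i, In i l -> Xa i ^ 2 + Xb i ^ 2 = r i ^ 2).
  { intros i Hi. rewrite (proj2 (Hr i Hi)). pose proof (HX i i Hi Hi).
    unfold bb in H. rewrite (Hmm i Hi) in H. lra. }
  assert (He : forall i, In i l -> e1 i ^ 2 + e2 i ^ 2 = 1).
  { intros i Hi. destruct (Hr i Hi). unfold e1, e2.
    replace ((Xa i / r i) ^ 2 + (Xb i / r i) ^ 2) with ((Xa i ^ 2 + Xb i ^ 2) / r i ^ 2) by (field; lra).
    rewrite HXX by auto. field. lra. }
  assert (Hz : forall i j, In i l -> In j l -> z i j = (a i * a j - bb i j) / (r i * r j)).
  { intros i j Hi Hj. destruct (Hr i Hi), (Hr j Hj). rewrite <- HX by auto.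
    unfold z, e1, e2. field. lra. }
  assert (Hcs : forall i, In i l -> cx i ^ 2 + sx i ^ 2 = 1).
  { intros i Hi. transitivity ((e1 q ^ 2 + e2 q ^ 2) * (e1 i ^ 2 + e2 i ^ 2)).
    - unfold cx, sx, z. ring.
    - rewrite !He by auto. ring. }
  assert (Hzc : forall i j, In i l -> In j l -> z i j = cx i * cx j + sx i * sx j).
  { intros i j Hi Hj. transitivity ((e1 q ^ 2 + e2 q ^ 2) * z i j).
    - rewrite He by auto. ring.
    - unfold cx, sx, z. ring. }
  assert (Hlens : forall i, In i l -> 0 <= cx i /\ (a i - 1) / (a i + 1) <= cx i ^ 2).
  { intros i Hi. destruct (Hr i Hi), (Hr q Hq). pose proof (HaK i Hi). pose proof (HaK q Hq).
    apply (lens_c (cx i) (a q * a i - bb q i) (r q) (r i) (a q) (a i)); try lra.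
    - assert (bb q i <= a q).
      { destruct (Nat.eq_dec i q) as [->|Hiq].
        + unfold bb. rewrite Hmm by auto. lra.
        + apply Hl in Hi. apply (Hmax' q i); lia. }
      nra.
    - unfold cx. apply Hz; auto. }
  assert (Hs : forall i, In i l -> sx i ^ 2 <= 2 / (a i + 1)).
  { intros i Hi. pose proof (Hcs i Hi). pose proof (Hlens i Hi). pose proof (HaK i Hi).
    replace (2 / (a i + 1)) with (1 - (a i - 1) / (a i + 1)) by (field; lra). lra. }
  assert (Hd : forall i j, In i l -> In j l -> i <> j -> d i j <= G * (sx i - sx j) ^ 2).
  { intros i j Hi Hj Hij. unfold d. rewrite Hzc by auto. unfold G.
    pose proof (Hlens i Hi). pose proof (Hlens j Hj).
    pose proof (frac_mono K0 (a i) HK0 (HaK i Hi)). pose proof (frac_mono K0 (a j) HK0 (HaK j Hj)).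
    apply cs_bound; auto; try tauto; unfold gam; lra. }
  assert (Hband : forall i j, In i l -> In j l -> i <> j -> forall A, 0 < A -> A <= a i < mu K0 * A ->
      A <= a j < mu K0 * A -> eta K0 / (mu K0 * A) ^ 2 <= d i j).
  { intros i j Hi Hj Hij A HA Hai Haj.
    assert (Hmu : 1 < mu K0) by (unfold mu; lra).
    pose proof (HaK i Hi). pose proof (HaK j Hj). destruct (Hr i Hi), (Hr j Hj).
    pose proof (Hra i Hi). pose proof (Hra j Hj).
    assert (Hgap : a i * a j - r i * r j <= mu K0).
    { destruct (Rle_dec (a i) (a j)).
      - apply band_gap; try lra. nra.
      - replace (a i * a j - r i * r j) with (a j * a i - r j * r i) by ring.
        apply band_gap; try lra. nra. }
    assert (HbKij : K0 <= bb i j) by (apply Hl in Hi; apply Hl in Hj; apply HbK; lia).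
    assert (Hrr : 0 < r i * r j) by (apply Rmult_lt_0_compat; lra).
    assert (Hrr2 : r i * r j <= (mu K0 * A) ^ 2) by nra.
    unfold d. rewrite Hz by auto.
    replace (1 - (a i * a j - bb i j) / (r i * r j)) with ((r i * r j - (a i * a j) + bb i j) / (r i * r j)) by (field; lra).
    assert (Heta : eta K0 <= r i * r j - a i * a j + bb i j) by (unfold eta, mu in *; lra).
    assert (0 < eta K0) by (unfold eta; lra).
    apply Rle_trans with (eta K0 / (r i * r j)).
    - apply Rmult_le_compat_l; [lra|]. apply Rinv_le_contravar; lra.
    - apply Rmult_le_compat_r; [apply Rlt_le, Rinv_0_lt_compat; lra| lra]. }
  set (b0 := Rmin bet 1).
  assert (Hbet : 0 < bet) by (unfold bet; apply Rdiv_lt_0_compat; [apply Aconst_pos; auto| lra]).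
  assert (Hb0 : 0 < b0 <= 1) by (unfold b0; unfold Rmin; destruct (Rle_dec bet 1); lra).
  assert (Hfar : forall i j, In i l -> In j l -> i <> j -> b0 ^ 2 / 4 <= d i j).
  { intros i j Hi Hj Hij. unfold d. apply angle_lb; auto.
    - assert (Hz2 : 1 - z i j ^ 2 = (e1 i * e2 j - e2 i * e1 j) ^ 2).
      { transitivity ((e1 i ^ 2 + e2 i ^ 2) * (e1 j ^ 2 + e2 j ^ 2) - z i j ^ 2).
        + rewrite !He by auto. ring.
        + unfold z. ring. }
      assert (0 <= (e1 i * e2 j - e2 i * e1 j) ^ 2) by apply pow2_ge_0. nra.
    - assert (Hb0b : b0 <= bet) by (unfold b0; apply Rmin_l).
      pose proof (Hl i) as Hi'. pose proof (Hl j) as Hj'.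
      assert (Hh := Hgt p i j ltac:(lia) ltac:(tauto) ltac:(tauto) ltac:(intros ->; tauto) ltac:(intros ->; tauto) Hij).
      rewrite hangle_formula in Hh by auto.
      replace ((mink (v i) (v j) + mink (v p) (v i) * mink (v p) (v j)) /
             sqrt ((mink (v i) (v i) + mink (v p) (v i) * mink (v p) (v i)) *
                   (mink (v j) (v j) + mink (v p) (v j) * mink (v p) (v j)))) with (z i j) in Hh.
      + lra.
      + rewrite Hz by auto. destruct (Hr i Hi), (Hr j Hj).
        rewrite !Hmm by auto.
        replace (-1 + mink (v p) (v i) * mink (v p) (v i)) with (r i ^ 2) by (unfold a in *; lra).
        replace (-1 + mink (v p) (v j) * mink (v p) (v j)) with (r j ^ 2) by (unfold a in *; lra).
        rewrite sqrt_mult by (apply pow2_ge_0). rewrite !sqrt_pow2 by lra.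
        unfold a, bb. f_equal. ring. }
  pose proof (total_count K0 G b0 l a sx d HK0 HG (proj1 Hb0) Hnd HaK Hs Hd Hband Hfar) as Htot.
  assert (HL := Lam_pos K0 G HK0 HG).
  assert (HX0 : K0 <= Lam K0 G * INR n ^ 2).
  { assert (PI * K0 / Lam K0 G < PI * INR n ^ 2).
    { unfold Aconst in Hbig.
      assert (0 <= 512 * G * PI ^ 2 / Lam K0 G) by (apply Rle_mult_inv_pos; [nra|lra]). lra. }
    apply Rlt_le. apply (Rmult_lt_reg_l (/ Lam K0 G)); [apply Rinv_0_lt_compat; lra|].
    replace (/ Lam K0 G * (Lam K0 G * INR n ^ 2)) with (INR n ^ 2) by (field; lra).
    replace (/ Lam K0 G * K0) with (PI * K0 / Lam K0 G / PI) by (field; lra).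
    apply (Rmult_lt_reg_l PI); [lra|]. replace (PI * (PI * K0 / Lam K0 G / PI)) with (PI * K0 / Lam K0 G) by (field; lra).
    lra. }
  destruct (exists_k K0 (mu K0) (Lam K0 G * INR n ^ 2) ltac:(lra) ltac:(unfold mu; lra) HX0) as [k Hk].
  apply (final_arith K0 G b0 n k HK0 HG (proj1 Hb0) Hbig); auto.
  - unfold b0, Rmin. destruct (Rle_dec bet 1).
    + unfold bet. apply Rmult_le_compat_l; [apply Rlt_le, Aconst_pos; auto|].
      apply Rinv_le_contravar; [lra|]. pose proof PI2_1. nra.
    + apply Rlt_le. apply (Rmult_lt_reg_r (PI * INR n ^ 2)); [nra|].
      replace (Aconst K0 G / (PI * INR n ^ 2) * (PI * INR n ^ 2)) with (Aconst K0 G) by (field; split; [apply not_0_INR; lia| lra]).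
      lra.
  - pose proof (Htot k). apply le_INR in Hlen. rewrite S_INR in Hlen. lra.
Qed.
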